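(* Let $d\ge 3$. In the subKautz digraph $sK(d,2)$, for every vertex $u$, the numbers $n_i$ of vertices at distance $i$ from $u$ are $n_0=1$, $n_1=d-1$, $n_2=(d-1)^2$, $n_3=2(d-1)$, $n_4=1$, and $n_i=0$ for $i\ge5$; moreover $sK(d,2)$ is antipodal. In the cyclic Kautz digraph $CK(d,3)$, for every vertex $u$, the numbers $N_i$ of vertices at distance $i$ from $u$ are $N_0=1$, $N_1=d-1$, $N_2=(d-1)^2$, $N_3=(d-1)^3-1$, $N_4=2(d-1)^2$, $N_5=d-1$, and $N_i=0$ for $i\ge 6$.
   Context: SubKautz digraph $sK(d,2)$: vertices $x_1x_2$ with $x_1\neq x_2$ in $\mathbb Z_{d+1}$; arcs $x_1x_2\to x_2x_3$ for $x_3\neq x_1,x_2$. Cyclic Kautz digraph $CK(d,3)$: vertices $x_1x_2x_3\in\mathbb Z_{d+1}^3$ with $x_1,x_2,x_3$ pairwise distinct; arcs $x_1x_2x_3\to x_2x_3y$ for $y\neq x_2,x_3$. A digraph is antipodal if every vertex $u$ has exactly one vertex $v$ at distance equal to the diameter from $u$, and simultaneously $u$ is at distance equal to the diameter from $v$. *)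

(* Defs.v *)
From mathcomp Require Import all_boot.
Set Implicit Arguments. Unset Strict Implicit. Unset Printing Implicit Defensive.

Definition walk (T : finType) (e : rel T) (k : nat) (u v : T) : bool :=
  [exists p : k.-tuple T, path e u p && (last u p == v)].

Definition is_dist (T : finType) (e : rel T) (u v : T) (i : nat) : bool :=
  walk e i u v && [forall j : 'I_i, ~~ walk e j u v].

Definition n_at (T : finType) (e : rel T) (u : T) (i : nat) : nat :=
  #|[set v | is_dist e u v i]|.

Definition is_diameter (T : finType) (e : rel T) (D : nat) : Prop :=
  (forall u v : T, exists j, j <= D /\ is_dist e u v j) /\
  (exists u v : T, is_dist e u v D).

Definition antipodal (T : finType) (e : rel T) : Prop :=
  exists D, is_diameter e D /\
    forall u : T, exists v : T,
      [set w | is_dist e u w D] = [set v] /\ is_dist e v u D.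

Definition sK_vert (d : nat) := {x : 'I_d.+1 * 'I_d.+1 | x.1 != x.2}.

Definition sK_arc (d : nat) : rel (sK_vert d) :=
  fun a b => let: (x1, x2) := val a in let: (y2, x3) := val b in
    [&& y2 == x2, x3 != x1 & x3 != x2].

Definition CK_vert (d : nat) :=
  {x : 'I_d.+1 * 'I_d.+1 * 'I_d.+1 |
     [&& x.1.1 != x.1.2, x.1.1 != x.2 & x.1.2 != x.2]}.

Definition CK_arc (d : nat) : rel (CK_vert d) :=
  fun a b => let: (x1, x2, x3) := val a in let: (y2, y3, y) := val b in
    [&& y2 == x2, y3 == x3, y != x2 & y != x3].

(* Main.v *)
Require Import Defs.
From mathcomp Require Import all_boot.
From mathcomp Require Import zify.
Set Implicit Arguments. Unset Strict Implicit. Unset Printing Implicit Defensive.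

Section Gen.
Variables (T : finType) (e : rel T).

Lemma walkP k u v : reflect (exists s : seq T, [/\ size s = k, path e u s & last u s = v]) (walk e k u v).
Proof.
apply: (iffP existsP) => [[p /andP [Hp /eqP Hl]] | [s [Hs Hp Hl]]].
  by exists (val p); rewrite size_tuple.
have Hs' : size s == k by apply/eqP.
by exists (Tuple Hs'); rewrite /= Hp Hl eqxx.
Qed.

Lemma walk0 u v : walk e 0 u v = (u == v).
Proof.
apply/walkP/eqP => [[s [Hs _ <-]] | <-]; last by exists [::].
by case: s Hs.
Qed.

Lemma walkSr k u v : walk e k.+1 u v = [exists w, walk e k u w && e w v].
Proof.
apply/walkP/existsP => [[s [Hs Hp Hl]] | [w /andP [/walkP [s [Hs Hp Hl]] Hw]]].
  move: Hs Hp Hl; case/lastP: s => [//|s x].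
  rewrite size_rcons rcons_path last_rcons => -[Hs] /andP [Hp Hx] Hl.
  exists (last u s); apply/andP; split; last by rewrite -Hl.
  by apply/walkP; exists s.
exists (rcons s v); rewrite size_rcons rcons_path last_rcons Hs Hp Hl Hw; split => //.
Qed.

Definition R k u v := [exists j : 'I_k.+1, walk e j u v].

Lemma R0 u v : R 0 u v = (u == v).
Proof.
apply/existsP/idP => [[j] | H]; last by exists ord0; rewrite walk0.
by rewrite (ord1 j) walk0.
Qed.

Lemma RS k u v : R k.+1 u v = (v == u) || [exists w, R k u w && e w v].
Proof.
apply/existsP/idP => [[[j Hj]] /= | /orP [/eqP -> | /existsP [w /andP [/existsP [[j Hj] Hw] He]]]].
- case: j Hj => [_|j Hj]; first by rewrite walk0 eq_sym => ->.
  rewrite walkSr => /existsP [w /andP [Hw He]].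
  apply/orP; right; apply/existsP; exists w; rewrite He andbT.
  by apply/existsP; exists (Ordinal (Hj : j < k.+1)).
- by exists ord0; rewrite walk0.
- by exists (Ordinal (Hj : j.+1 < k.+2)); rewrite walkSr; apply/existsP; exists w; rewrite Hw He.
Qed.

Lemma RW k u v : walk e k u v -> R k u v.
Proof. by move=> H; apply/existsP; exists ord_max. Qed.

Lemma Rmono k l u v : k <= l -> R k u v -> R l u v.
Proof.
move=> Hkl /existsP [[j Hj] Hw]; apply/existsP.
have Hj' : j < l.+1 by lia.
by exists (Ordinal Hj').
Qed.

Lemma is_dist0 u v : is_dist e u v 0 = (u == v).
Proof.
rewrite /is_dist walk0; case: (u == v) => //=.
by apply/forallP => -[].
Qed.

Lemma is_distS i u v : is_dist e u v i.+1 = R i.+1 u v && ~~ R i u v.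
Proof.
rewrite {1 2}/R; apply/andP/andP => [[Hw /forallP Hn] | [/existsP [[j Hj] Hw] HR]].
  split; first exact: RW.
  apply/negP => /existsP [[j Hj] Hj'].
  by move: (Hn (Ordinal (Hj : j < i.+1))); rewrite Hj'.
have Ej : j = i.+1.
  apply/eqP; rewrite eqn_leq -ltnS Hj /=; rewrite leqNgt; apply/negP => Hji.
  by move/negP: HR; apply; apply/existsP; exists (Ordinal (Hji : j < i.+1)).
subst j; split => //; apply/forallP => -[j Hj2] /=; apply/negP => Hw'.
by move/negP: HR; apply; apply/existsP; exists (Ordinal (Hj2 : j < i.+1)).
Qed.

Lemma is_dist_big k i u v : R k u v -> k < i -> is_dist e u v i = false.
Proof.
case: i => // i Hk Hki; rewrite is_distS.
by rewrite (@Rmono k i u v Hki Hk) andbF.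
Qed.

End Gen.


Lemma card_pairs (T1 T2 : finType) (A : pred T1) (B : T1 -> pred T2) k :
  (forall x, A x -> #|B x| = k) -> #|[pred p : T1 * T2 | A p.1 && B p.1 p.2]| = #|A| * k.
Proof.
move=> HB; rewrite -[LHS]sum1_card.
transitivity (\sum_(p | A p.1 && B p.1 p.2) 1); first by apply: eq_bigl.
rewrite -(pair_big_dep A B (fun _ _ => 1)) /=.
rewrite -sum_nat_const; apply: eq_bigr => x Hx.
by rewrite sum1_card HB.
Qed.

Lemma card_pairs' (T1 T2 : finType) (P : pred (T1 * T2)) (A : pred T1) (B : T1 -> pred T2) k :
  (forall p, P p = A p.1 && B p.1 p.2) ->
  (forall x, A x -> #|B x| = k) -> #|P| = #|A| * k.
Proof.
move=> HP HB; rewrite -(card_pairs HB); apply: eq_card => p; by rewrite !inE /= -HP.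
Qed.

Lemma card_or (T : finType) (P P1 P2 : pred T) :
  (forall p, P p = P1 p || P2 p) -> (forall p, P1 p -> P2 p = false) ->
  #|P| = #|P1| + #|P2|.
Proof.
move=> HP Hd; rewrite -(cardID P1 P); congr (_ + _); apply: eq_card => p; rewrite !inE /= -!topredE /= HP.
  by case: (P1 p); rewrite ?andbF.
by case H1: (P1 p) => /=; [rewrite (Hd p H1) | ].
Qed.

Lemma card_notin d (s : seq 'I_d.+1) : uniq s -> #|[pred x | x \notin s]| = d.+1 - size s.
Proof.
move=> Hu; have H := cardC (mem s); rewrite card_ord (card_uniqP Hu) in H.
have E : #|[pred x | x \notin s]| = #|[predC (mem s)]| by apply: eq_card => x; rewrite !inE.
rewrite E; apply/eqP; rewrite -(eqn_add2l (size s)) subnKC; first by rewrite H.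
by apply: (leq_trans _ (eq_leq H)); exact: leq_addr.
Qed.

Lemma card_eq1 (T : finType) (a : T) : #|[pred x | x == a]| = 1.
Proof. by rewrite -(card1 a); apply: eq_card => x; rewrite !inE. Qed.

Lemma card_sigset (T : finType) (Q : pred T) (P : T -> bool) :
  #|[set v : {x | Q x} | P (val v)]| = #|[pred x | Q x && P x]|.
Proof.
rewrite -(card_imset _ val_inj); apply: eq_card => x; rewrite inE.
apply/imsetP/andP => [[v Hv ->] | [Qx Px]].
  by rewrite inE in Hv; split => //; exact: valP.
by exists (exist _ x Qx) => //; rewrite inE.
Qed.


Lemma ordE n (x y : 'I_n) : (x == y) = (nat_of_ord x == nat_of_ord y).
Proof. by []. Qed.

Lemma fresh d (s : seq 'I_d.+1) : size s < d.+1 -> exists x, x \notin s.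
Proof.
move=> Hs.
case: (pickP [pred x | x \notin s]) => [x Hx|H]; first by exists x.
exfalso.
have : #|'I_d.+1| <= #|s|.
  apply: subset_leq_card; apply/subsetP => x _; move: (H x) => /= /negbFE.
  done.
move=> H1; have := leq_trans H1 (card_size s); by rewrite card_ord ltnNge -ltnS Hs.
Qed.

Section SK.
Variables (d : nat) (hd : 3 <= d).

Definition Ps (k : nat) (a b x y : 'I_d.+1) : bool :=
  match k with
  | 0 => (x == a) && (y == b)
  | 1 => (x == a) && (y == b) || (x == b) && (y != a)
  | 2 => (x == a) && (y == b) || (x == b) && (y != a) || (x != a) && (x != b) && (y != b)
  | 3 => ~~ ((x == b) && (y == a))
  | _ => true
  end.

Definition mkS (x y : 'I_d.+1) (H : x != y) : sK_vert d :=
  exist (fun p : 'I_d.+1 * 'I_d.+1 => p.1 != p.2) (x, y) H.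

Lemma sK_R k (u v : sK_vert d) : k <= 4 ->
  R (@sK_arc d) k u v = Ps k (val u).1 (val u).2 (val v).1 (val v).2.
Proof.
move: u => [[a b] hab] /=.
elim: k v => [|k IH] [[x y] hxy] /= Hk.
  by rewrite R0 eq_sym -(inj_eq val_inj) /= xpair_eqE.
have IH' := IH _ (ltnW Hk).
apply/idP/idP.
- rewrite RS => /orP [|/existsP [[[p q] hpq] /andP [H1 H2]]].
    rewrite -(inj_eq val_inj) /= xpair_eqE !ordE => He.
    by case: k {IH IH'} Hk => [|[|[|[|k]]]] //= _; rewrite /= !ordE in hab hxy *; lia.
  rewrite IH' /= in H1; rewrite /sK_arc /= in H2.
  by case: k {IH IH'} Hk H1 => [|[|[|[|k]]]] //= _; rewrite /= !ordE in hab hxy hpq H2 *; lia.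
- move=> HP.
  case HPk: (Ps k a b x y).
    apply: (@Rmono _ _ k); first by [].
    by rewrite IH'.
  rewrite RS; apply/orP; right; apply/existsP.
  case: k {IH} Hk HP HPk IH' => [|[|[|[|k]]]] //= _ HP HPk IH'.
  + exists (mkS hab); rewrite IH' /=; clear IH'; rewrite /= !eqxx /= /sK_arc /=.
    by rewrite /= !ordE in hab hxy HP HPk *; lia.
  + have hbx : b != x by rewrite /= !ordE in HP HPk *; lia.
    exists (mkS hbx); rewrite IH' /=; clear IH'; rewrite /= /sK_arc /=.
    by rewrite /= !ordE in hab hxy hbx HP HPk *; lia.
  + case Hxa: (x == a).
      have [p] := @fresh d [:: a; b; y] ltac:(rewrite /=; lia).
      rewrite !inE => Hp.
      have hpx : p != a by rewrite /= !ordE in Hp *; lia.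
      exists (mkS hpx); rewrite IH' /=; clear IH'; rewrite /= /sK_arc /=.
      by rewrite /= !ordE in hab hxy hpx Hp HP HPk Hxa *; lia.
    have [p] := @fresh d [:: a; b; x] ltac:(rewrite /=; lia).
    rewrite !inE => Hp.
    have hpx : p != x by rewrite /= !ordE in Hp *; lia.
    exists (mkS hpx); rewrite IH' /=; clear IH'; rewrite /= /sK_arc /=.
    by rewrite /= !ordE in hab hxy hpx Hp HP HPk Hxa *; lia.
  + have [p] := @fresh d [:: a; b] ltac:(rewrite /=; lia).
    rewrite !inE => Hp.
    have hpx : p != b by rewrite /= !ordE in Hp *; lia.
    exists (mkS hpx); rewrite IH' /=; clear IH'; rewrite /= /sK_arc /=.
    by rewrite /= !ordE in hab hxy hpx Hp HP HPk *; lia.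
Qed.


Definition Ds (i : nat) (a b x y : 'I_d.+1) : bool :=
  match i with
  | 0 => (x == a) && (y == b)
  | 1 => (x == b) && (y != a)
  | 2 => (x != a) && (x != b) && (y != b)
  | 3 => (x == a) && (y != b) || (x != a) && (x != b) && (y == b)
  | 4 => (x == b) && (y == a)
  | _ => false
  end.

Ltac bsolve := apply/idP/idP; rewrite /= ?inE ?ordE; lia.

Lemma sK_dist i (u v : sK_vert d) :
  is_dist (@sK_arc d) u v i = Ds i (val u).1 (val u).2 (val v).1 (val v).2.
Proof.
move: u v => [[a b] hab] [[x y] hxy] /=.
case: i => [|i].
  rewrite is_dist0 -(inj_eq val_inj) /= xpair_eqE.
  by rewrite /= ?ordE in hab hxy *; bsolve.
case: (ltnP i 4) => Hi.
  rewrite is_distS !sK_R //= ; last by apply: ltnW.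
  by case: i Hi => [|[|[|[|i]]]] //= _; rewrite /= ?ordE in hab hxy *; bsolve.
rewrite (@is_dist_big _ _ 4); first by case: i Hi => [|[|[|[|i]]]].
  by rewrite sK_R.
by [].
Qed.

Lemma sK_key (a b : 'I_d.+1) (hab : a != b) i :
  n_at (@sK_arc d) (mkS hab) i =
  #|[pred p : 'I_d.+1 * 'I_d.+1 | (p.1 != p.2) && Ds i a b p.1 p.2]|.
Proof.
rewrite /n_at -(card_sigset (fun p => p.1 != p.2) (fun p => Ds i a b p.1 p.2)).
by apply: eq_card => v; rewrite !inE sK_dist.
Qed.

Lemma uniq2 (a b : 'I_d.+1) : a != b -> uniq [:: a; b].
Proof. by move=> H; rewrite /= inE H. Qed.

Lemma sK_counts (u : sK_vert d) :
      (n_at (@sK_arc d) u 0 = 1 /\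
          n_at (@sK_arc d) u 1 = d - 1 /\
          n_at (@sK_arc d) u 2 = (d - 1) ^ 2 /\
          n_at (@sK_arc d) u 3 = 2 * (d - 1) /\
          n_at (@sK_arc d) u 4 = 1 /\
          forall i, 5 <= i -> n_at (@sK_arc d) u i = 0).
Proof.
move: u => [[a b] hab].
have -> : exist _ (a, b) hab = mkS hab by [].
rewrite !sK_key.
split.
  rewrite (@card_pairs' _ _ _ [pred x | x == a] (fun _ => [pred y | y == b]) 1).
  - by rewrite card_eq1.
  - by move=> [x y]; rewrite /= ?ordE in hab *; bsolve.
  - by move=> x _; rewrite card_eq1.
split.
  rewrite (@card_pairs' _ _ _ [pred x | x == b] (fun _ => [pred y | y \notin [:: a; b]]) (d.+1 - 2)).
  - by rewrite card_eq1; lia.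
  - by move=> [x y]; rewrite /= ?ordE in hab *; bsolve.
  - by move=> x _; rewrite card_notin ?uniq2.
split.
  rewrite (@card_pairs' _ _ _ [pred x | x \notin [:: a; b]] (fun x => [pred y | y \notin [:: x; b]]) (d.+1 - 2)).
  - by rewrite card_notin ?uniq2 //= expnS expn1; lia.
  - by move=> [x y]; rewrite /= ?ordE in hab *; bsolve.
  - move=> x Hx; rewrite card_notin ?uniq2 //.
    by rewrite /= !inE in Hx *; rewrite /= ?ordE in Hx *; lia.
split.
  rewrite (@card_or _ _ [pred p | (p.1 == a) && (p.2 \notin [:: a; b])]
                        [pred p | (p.1 \notin [:: a; b]) && (p.2 == b)]).
  - rewrite (@card_pairs' _ _ _ [pred x | x == a] (fun _ => [pred y | y \notin [:: a; b]]) (d.+1 - 2)) //.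
    rewrite (@card_pairs' _ _ _ [pred x | x \notin [:: a; b]] (fun _ => [pred y | y == b]) 1) //.
    + by rewrite card_eq1 card_notin ?uniq2 //=; lia.
    + by move=> x _; rewrite card_eq1.
    + by move=> x _; rewrite card_notin ?uniq2.
  - by move=> [x y]; rewrite /= ?ordE in hab *; bsolve.
  - by move=> [x y]; rewrite /= !inE ?ordE; lia.
split.
  rewrite (@card_pairs' _ _ _ [pred x | x == b] (fun _ => [pred y | y == a]) 1).
  - by rewrite card_eq1.
  - by move=> [x y]; rewrite /= ?ordE in hab *; bsolve.
  - by move=> x _; rewrite card_eq1.
move=> i Hi; rewrite sK_key; apply: eq_card0 => p.
by rewrite inE; case: i Hi => [|[|[|[|[|i]]]]] //= _; rewrite andbF.
Qed.


Lemma sK_antipodal : antipodal (@sK_arc d).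
Proof.
exists 4; split; [split|].
- move=> [[a b] hab] [[x y] hxy].
  have H : [|| Ds 0 a b x y, Ds 1 a b x y, Ds 2 a b x y, Ds 3 a b x y | Ds 4 a b x y].
    by rewrite /= ?ordE in hab hxy *; lia.
  case/orP: H => [H|/orP[H|/orP[H|/orP[H|H]]]];
    [exists 0 | exists 1 | exists 2 | exists 3 | exists 4]; by rewrite sK_dist.
- have h1 : 1 < d.+1 by lia.
  have h01 : (ord0 : 'I_d.+1) != Ordinal h1 by [].
  have h10 : Ordinal h1 != (ord0 : 'I_d.+1) by [].
  by exists (mkS h01), (mkS h10); rewrite sK_dist /= !eqxx.
- move=> [[a b] hab]; have hba : b != a by rewrite eq_sym.
  exists (mkS hba); split; last by rewrite sK_dist /= !eqxx.
  apply/setP => -[[x y] hxy]; rewrite !inE sK_dist -(inj_eq val_inj) /= xpair_eqE.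
  by [].
Qed.

End SK.


Ltac crush := repeat match goal with
  | H : is_true (_ && _) |- _ => let H1 := fresh "H" in let H2 := fresh "H" in case/andP: H => H1 H2
  | H : is_true (_ || _) |- _ => let H1 := fresh "H" in case/orP: H => H1
  | H : is_true (~~ (_ || _)) |- _ => rewrite negb_or in H
  | H : is_true (@eq_op _ ?x ?y) |- _ => let H1 := fresh "E" in move/eqP: H => H1; subst
  end;
  repeat match goal with H : is_true _ |- _ => revert H end;
  rewrite ?eqxx /= ?ordE; lia.

Ltac dec :=
  repeat match goal with H : is_true _ |- _ => revert H end;
  repeat (match goal with
  | |- context [?x == ?x] => rewrite eqxx
  | H : ?x <> ?y |- context [?x == ?y] => rewrite (negbTE (introN eqP H))
  | H : ?x <> ?y |- context [?y == ?x] => rewrite [y == x]eq_sym (negbTE (introN eqP H))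
  | |- context [?x == ?y] =>
       is_var x; is_var y;
       let E := fresh "E" in
       case: (@eqP _ x y) => E; [ subst x | ]
  end; simpl);
  intros; repeat match goal with H : is_true false |- _ => discriminate H end;
  try done;
  match goal with H : ?x <> ?x |- _ => case: (H erefl) end.

Section CK.
Variables (d : nat) (hd : 3 <= d).

Definition Pc (k : nat) (a b c x y z : 'I_d.+1) : bool :=
  match k with
  | 0 => [&& x == a, y == b & z == c]
  | 1 => [&& x == a, y == b & z == c] || (x == b) && (y == c)
  | 2 => [&& x == a, y == b & z == c] || (x == b) && (y == c) || (x == c) && (y != b)
  | 3 => [&& x == a, y == b & z == c] || (x == b) && (y == c) || (x == c) && (y != b)
         || [&& x != b, x != c & y != c]
  | 4 => ~~ ((x == c) && (y == b))
  | _ => true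
  end.

Definition mkC (x y z : 'I_d.+1) (H : [&& x != y, x != z & y != z]) : CK_vert d :=
  exist (fun p : 'I_d.+1 * 'I_d.+1 * 'I_d.+1 => [&& p.1.1 != p.1.2, p.1.1 != p.2 & p.1.2 != p.2]) (x, y, z) H.

Lemma CK_R k (u v : CK_vert d) : k <= 5 ->
  R (@CK_arc d) k u v = Pc k (val u).1.1 (val u).1.2 (val u).2 (val v).1.1 (val v).1.2 (val v).2.
Proof.
move: u => [[[a b] c] habc] /=.
case/and3P: (habc) => hab hac hbc; rewrite /= in hab hac hbc.
elim: k v => [|k IH] [[[x y] z] hxyz] /= Hk.
  by rewrite R0 eq_sym -(inj_eq val_inj) /= !xpair_eqE andbA.
case/and3P: (hxyz) => hxy hxz hyz; rewrite /= in hxy hxz hyz.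
have IH' := IH _ (ltnW Hk).
apply/idP/idP.
- rewrite RS => /orP [|/existsP [[[[p q] r] hpqr] /andP [H1 H2]]].
    rewrite -(inj_eq val_inj) /= !xpair_eqE => He.
    clear IH IH' hxyz habc.
    by case: k Hk => [|[|[|[|[|k]]]]] //= _; crush.
  case/and3P: (hpqr) => hpq hpr hqr.
  rewrite IH' /= in H1; rewrite /CK_arc /= in H2.
  case/and4P: H2 => /eqP Ex /eqP Ey Hzq Hzr; subst x y.
  clear IH IH' hxyz habc hpqr.
  by case: k Hk H1 => [|[|[|[|[|k]]]]] //= _ H1; crush.
- move=> HP.
  case HPk: (Pc k a b c x y z).
    apply: (@Rmono _ _ k); first by [].
    by rewrite IH'.
  rewrite RS; apply/orP; right; apply/existsP.
  case: k {IH} Hk HP HPk IH' => [|[|[|[|[|k]]]]] //= _ HP HPk IH'.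
  + rewrite HPk /= in HP; case/andP: HP => /eqP Ex /eqP Ey; subst x y.
    exists (mkC habc); rewrite IH' /=; clear IH'; rewrite /= !eqxx /= /CK_arc /=.
    by rewrite ?eqxx ?[z == _]eq_sym hxz hyz.
  + rewrite HPk /= in HP; case/andP: HP => /eqP Ex Hyb; subst x.
    have h : [&& b != c, b != y & c != y].
      by move: hbc hxy Hyb; clear -hd; rewrite /= ?ordE; lia.
    exists (mkC h); rewrite IH' /=; clear IH'; rewrite /= /CK_arc /= !eqxx /=.
    by rewrite ?eqxx ?[z == _]eq_sym hxz hyz orbT.
  + rewrite HPk /= in HP; case/and3P: HP => Hxb Hxc Hyc.
    have h : [&& c != x, c != y & x != y].
      by move: Hxc Hyc hxy; clear -hd; rewrite /= ?ordE; lia.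
    exists (mkC h); rewrite IH' /=; clear IH'; rewrite /= /CK_arc /= !eqxx /=.
    by rewrite ?[z == _]eq_sym Hxb hxz hyz !orbT.
  + move/negbT: HPk; rewrite !negb_or => /andP [/andP [/andP [H0 H1] H2] H3].
    case Hxb: (x == b).
      move/eqP: Hxb => Hxb; subst x.
      have Hyc : y != c by rewrite eqxx /= in H1.
      have [p] := @fresh d [:: b; c; y] ltac:(rewrite /=; clear -hd; lia).
      rewrite !inE => Hp.
      have h : [&& p != b, p != y & b != y].
        by move: Hp hxy; clear -hd; rewrite /= ?ordE; lia.
      exists (mkC h); rewrite IH' /=; clear IH'; rewrite /= /CK_arc /= !eqxx /=.
      rewrite ?eqxx ?[z == _]eq_sym hxz hyz !andbT.
      by move: Hp hbc; clear -hd; rewrite /= ?ordE; lia.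
    have Hxc : x != c.
      by apply/negP => /eqP Exc; subst x; rewrite eqxx /= in H2 HP; rewrite HP in H2.
    have Hyc : y == c.
      by move: H3; rewrite Hxb Hxc /= negbK.
    move/eqP: Hyc => Hyc; subst y.
    have [p] := @fresh d [:: b; c; x] ltac:(rewrite /=; clear -hd; lia).
    rewrite !inE => Hp.
    have h : [&& p != x, p != c & x != c].
      by move: Hp Hxc; clear -hd; rewrite /= ?ordE; lia.
    exists (mkC h); rewrite IH' /=; clear IH'; rewrite /= /CK_arc /= !eqxx /=.
    rewrite ?eqxx ?[z == _]eq_sym hxz hyz !andbT.
    by move: Hp Hxc; clear -hd; rewrite /= ?ordE; lia.
  + move/negbT: HPk; rewrite negbK => /andP [/eqP Ex /eqP Ey]; subst x y.
    have [p] := @fresh d [:: b; c] ltac:(rewrite /=; clear -hd; lia).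
    rewrite !inE => Hp.
    have h : [&& p != c, p != b & c != b].
      by move: Hp hxy; clear -hd; rewrite /= ?ordE; lia.
    exists (mkC h); rewrite IH' /=; clear IH'; rewrite /= /CK_arc /= !eqxx /=.
    rewrite ?eqxx ?[z == _]eq_sym hxz hyz !andbT.
    by move: Hp; clear -hd; rewrite /= ?ordE; lia.
Qed.


Definition Dc (i : nat) (a b c x y z : 'I_d.+1) : bool :=
  match i with
  | 0 => [&& x == a, y == b & z == c]
  | 1 => (x == b) && (y == c)
  | 2 => (x == c) && (y != b)
  | 3 => [&& x != b, x != c, y != c & ~~ [&& x == a, y == b & z == c]]
  | 4 => (x == b) && (y != c) || [&& x != b, x != c & y == c]
  | 5 => (x == c) && (y == b)
  | _ => false
  end.

Lemma CK_dist i (u v : CK_vert d) :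
  is_dist (@CK_arc d) u v i =
  Dc i (val u).1.1 (val u).1.2 (val u).2 (val v).1.1 (val v).1.2 (val v).2.
Proof.
move: u v => [[[a b] c] habc] [[[x y] z] hxyz] /=.
case: i => [|i].
  rewrite is_dist0 -(inj_eq val_inj) /= !xpair_eqE.
  by clear -hd; dec.
case: (ltnP i 5) => Hi.
  rewrite is_distS !CK_R //= ; last by apply: ltnW.
  move: habc hxyz; clear -hd Hi.
  by case: i Hi => [|[|[|[|[|i]]]]] //= _; dec.
rewrite (@is_dist_big _ _ 5); first by case: i Hi => [|[|[|[|[|i]]]]].
  by rewrite CK_R.
by [].
Qed.

Lemma CK_key (a b c : 'I_d.+1) (habc : [&& a != b, a != c & b != c]) i :
  n_at (@CK_arc d) (mkC habc) i =
  #|[pred p : 'I_d.+1 * 'I_d.+1 * 'I_d.+1 |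
     [&& p.1.1 != p.1.2, p.1.1 != p.2 & p.1.2 != p.2] && Dc i a b c p.1.1 p.1.2 p.2]|.
Proof.
rewrite /n_at -(card_sigset (fun p : 'I_d.+1 * 'I_d.+1 * 'I_d.+1 => [&& p.1.1 != p.1.2, p.1.1 != p.2 & p.1.2 != p.2])
   (fun p => Dc i a b c p.1.1 p.1.2 p.2)).
by apply: eq_card => v; rewrite !inE CK_dist.
Qed.

Definition Bz (q : 'I_d.+1 * 'I_d.+1) := [pred z | z \notin [:: q.1; q.2]].

Lemma cardBz q : q.1 != q.2 -> #|Bz q| = d.+1 - 2.
Proof. by move=> H; rewrite card_notin //= inE H. Qed.

Lemma card1x1 (a b : 'I_d.+1) : #|[pred q : 'I_d.+1 * 'I_d.+1 | (q.1 == a) && (q.2 == b)]| = 1.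
Proof.
rewrite (@card_pairs' _ _ _ [pred x | x == a] (fun _ => [pred y | y == b]) 1) //.
  by rewrite card_eq1.
by move=> x _; rewrite card_eq1.
Qed.

Lemma CK_counts (u : CK_vert d) :
      (n_at (@CK_arc d) u 0 = 1 /\
          n_at (@CK_arc d) u 1 = d - 1 /\
          n_at (@CK_arc d) u 2 = (d - 1) ^ 2 /\
          n_at (@CK_arc d) u 3 = (d - 1) ^ 3 - 1 /\
          n_at (@CK_arc d) u 4 = 2 * (d - 1) ^ 2 /\
          n_at (@CK_arc d) u 5 = d - 1 /\
          forall i, 6 <= i -> n_at (@CK_arc d) u i = 0).
Proof.
move: u => [[[a b] c] habc].
have -> : exist _ (a, b, c) habc = mkC habc by [].
case/and3P: (habc) => hab hac hbc.
rewrite !CK_key.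
have E2 : d.+1 - 2 = d - 1 by lia.
split.
  rewrite (@card_pairs' _ _ _ [pred q | (q.1 == a) && (q.2 == b)] (fun _ => [pred z | z == c]) 1).
  - by rewrite card1x1.
  - by move=> [[x y] z]; rewrite /= ?inE; clear habc; dec.
  - by move=> x _; rewrite card_eq1.
split.
  rewrite (@card_pairs' _ _ _ [pred q | (q.1 == b) && (q.2 == c)] Bz (d.+1 - 2)).
  - by rewrite card1x1 E2 mul1n.
  - by move=> [[x y] z]; rewrite /= ?inE; clear habc; dec.
  - by move=> [x y]; rewrite ?inE /= => /andP [/eqP -> /eqP ->]; rewrite cardBz.
split.
  rewrite (@card_pairs' _ _ _ [pred q | (q.1 == c) && (q.2 \notin [:: b; c])] Bz (d.+1 - 2)).
  - rewrite (@card_pairs' _ _ _ [pred x | x == c] (fun _ => [pred y | y \notin [:: b; c]]) (d.+1 - 2)) //.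
      by rewrite card_eq1 E2 expnS expn1 mul1n.
    by move=> x _; rewrite card_notin ?uniq2.
  - by move=> [[x y] z]; rewrite /= ?inE; clear habc; dec.
  - move=> [x y]; rewrite ?inE /= => /andP [/eqP -> Hy]; rewrite cardBz //=.
    by move: Hy; rewrite ?inE; clear habc; dec.
split.
  pose W := [pred p : 'I_d.+1 * 'I_d.+1 * 'I_d.+1 |
      [&& p.1.1 \notin [:: b; c], p.1.2 \notin [:: c; p.1.1] & p.2 \notin [:: p.1.1; p.1.2]]].
  have Hor : #|W| = #|[pred p : 'I_d.+1 * 'I_d.+1 * 'I_d.+1 |
     [&& p.1.1 != p.1.2, p.1.1 != p.2 & p.1.2 != p.2] && Dc 3 a b c p.1.1 p.1.2 p.2]| + 1.
    rewrite (@card_or _ W [pred p : 'I_d.+1 * 'I_d.+1 * 'I_d.+1 |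
     [&& p.1.1 != p.1.2, p.1.1 != p.2 & p.1.2 != p.2] && Dc 3 a b c p.1.1 p.1.2 p.2] [pred p | p == (a, b, c)]) ?card_eq1 //.
      by move=> [[x y] z]; rewrite /= ?inE ?xpair_eqE; clear habc; dec.
    by move=> [[x y] z]; rewrite /= ?inE ?xpair_eqE; clear habc; dec.
  have HWc : #|W| = (d - 1) * (d - 1) * (d - 1).
    have P1 : forall p, W p = [pred q : 'I_d.+1 * 'I_d.+1 | (q.1 \notin [:: b; c]) && (q.2 \notin [:: c; q.1])] p.1 && Bz p.1 p.2.
      by move=> [[x y] z]; rewrite /= andbA.
    have B1 : forall q, [pred q : 'I_d.+1 * 'I_d.+1 | (q.1 \notin [:: b; c]) && (q.2 \notin [:: c; q.1])] q -> #|Bz q| = d.+1 - 2.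
      move=> [x y]; rewrite ?inE /= => /andP [Hx Hy]; rewrite cardBz //=.
      by move: Hx Hy; rewrite ?inE; clear habc; dec.
    rewrite (card_pairs' P1 B1).
    have P2 : forall q : 'I_d.+1 * 'I_d.+1, [pred q : 'I_d.+1 * 'I_d.+1 | (q.1 \notin [:: b; c]) && (q.2 \notin [:: c; q.1])] q =
       [pred x | x \notin [:: b; c]] q.1 && [pred y | y \notin [:: c; q.1]] q.2 by [].
    have B2 : forall x, [pred x | x \notin [:: b; c]] x -> #|[pred y | y \notin [:: c; x]]| = d.+1 - 2.
      move=> x Hx; rewrite card_notin //=.
      by move: Hx; rewrite ?inE; clear habc; dec.
    rewrite (card_pairs' P2 B2).
    by rewrite card_notin ?uniq2 // E2.
  have -> : (d - 1) ^ 3 = (d - 1) * (d - 1) * (d - 1) by rewrite !expnS expn0 muln1 mulnA.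
  rewrite HWc in Hor; rewrite Hor addnK; apply: eq_card => p; by rewrite !inE.
split.
  rewrite (@card_or _ _ [pred p : 'I_d.+1 * 'I_d.+1 * 'I_d.+1 | ((p.1.1 == b) && (p.1.2 \notin [:: b; c])) && Bz p.1 p.2]
                        [pred p : 'I_d.+1 * 'I_d.+1 * 'I_d.+1 | ((p.1.1 \notin [:: b; c]) && (p.1.2 == c)) && Bz p.1 p.2]).
  - rewrite (@card_pairs' _ _ _ [pred q | (q.1 == b) && (q.2 \notin [:: b; c])] Bz (d.+1 - 2)) //; last first.
      move=> [x y]; rewrite ?inE /= => /andP [/eqP -> Hy]; rewrite cardBz //=.
      by move: Hy; rewrite ?inE; clear habc; dec.
    rewrite (@card_pairs' _ _ _ [pred q | (q.1 \notin [:: b; c]) && (q.2 == c)] Bz (d.+1 - 2)) //; last first.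
      move=> [x y]; rewrite ?inE /= => /andP [Hx /eqP ->]; rewrite cardBz //=.
      by move: Hx; rewrite ?inE; clear habc; dec.
    rewrite (@card_pairs' _ _ _ [pred x | x == b] (fun _ => [pred y | y \notin [:: b; c]]) (d.+1 - 2)) //; last first.
      by move=> x _; rewrite card_notin ?uniq2.
    rewrite (@card_pairs' _ _ _ [pred x | x \notin [:: b; c]] (fun _ => [pred y | y == c]) 1) //; last first.
      by move=> x _; rewrite card_eq1.
    by rewrite !card_eq1 card_notin ?uniq2 // E2 /= expnS expn1; lia.
  - by move=> [[x y] z]; rewrite /= ?inE; clear habc; dec.
  - by move=> [[x y] z]; rewrite /= ?inE; clear habc; dec.
split.
  rewrite (@card_pairs' _ _ _ [pred q | (q.1 == c) && (q.2 == b)] Bz (d.+1 - 2)).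
  - by rewrite card1x1 E2 mul1n.
  - by move=> [[x y] z]; rewrite /= ?inE; clear habc; dec.
  - by move=> [x y]; rewrite ?inE /= => /andP [/eqP -> /eqP ->]; rewrite cardBz // eq_sym.
move=> i Hi; rewrite CK_key; apply: eq_card0 => p.
by rewrite inE; case: i Hi => [|[|[|[|[|[|i]]]]]] //= _; rewrite andbF.
Qed.

End CK.

Theorem mainTheorem14 (d : nat) (hd : 3 <= d) :
  ((forall u : sK_vert d,
      (n_at (@sK_arc d) u 0 = 1 /\
          n_at (@sK_arc d) u 1 = d - 1 /\
          n_at (@sK_arc d) u 2 = (d - 1) ^ 2 /\
          n_at (@sK_arc d) u 3 = 2 * (d - 1) /\
          n_at (@sK_arc d) u 4 = 1 /\
          forall i, 5 <= i -> n_at (@sK_arc d) u i = 0))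
   /\ antipodal (@sK_arc d))
  /\
  (forall u : CK_vert d,
      (n_at (@CK_arc d) u 0 = 1 /\
          n_at (@CK_arc d) u 1 = d - 1 /\
          n_at (@CK_arc d) u 2 = (d - 1) ^ 2 /\
          n_at (@CK_arc d) u 3 = (d - 1) ^ 3 - 1 /\
          n_at (@CK_arc d) u 4 = 2 * (d - 1) ^ 2 /\
          n_at (@CK_arc d) u 5 = d - 1 /\
          forall i, 6 <= i -> n_at (@CK_arc d) u i = 0)).
Proof.
split; [split|].
- by move=> u; apply: sK_counts.
- exact: sK_antipodal.
- by move=> u; apply: CK_counts.
Qed.
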